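(* Let $(M,\cdot,1)$ be a monoid without a zero element, $\Sigma$ a finite alphabet, $(g_h,h)$ a maximal factorization on $L$, and $\ell\in L$. If $N^{(g_h,h)}(h(\ell),g_h(\ell))$ is an $M$-DFA (i.e. its state set $\{S^{(g_h,h)}_\alpha(h(\ell))\mid\alpha\in\Sigma^*\}$ is finite), then it is a minimal $M$-DFA recognizing $\ell$.
   Context: $L$ is the set of all functions $\Sigma^*\to M$; $\varepsilon$ the empty word; $(m\cdot\ell)(\gamma)=m\cdot\ell(\gamma)$; $\Delta_\alpha(\ell)(\gamma)=\ell(\alpha\gamma)$. A factorization on $L$ is a pair $g:L\to M$, $f:L\to L$ with $g(\ell)\cdot f(\ell)=\ell$ for all $\ell$. A maximal factorization is a factorization $(g_h,h)$ with $h(m\cdot\ell)=h(\ell)$ for all $\ell\in L$, $m\in M$. Define $S^{(g,f)}_\varepsilon=\mathrm{id}_L$, $S^{(g,f)}_{\alpha\sigma}=f\circ\Delta_\sigma\circ S^{(g,f)}_\alpha$. $N^{(g,f)}(\ell,m)$ is the automaton with states $S^{(g,f)}_\alpha(\ell)$ ($\alpha\in\Sigma^*$), initial state $\ell$, initial value $m$, $\delta(S^{(g,f)}_\alpha(\ell),\sigma)=S^{(g,f)}_{\alpha\sigma}(\ell)$, $w(S^{(g,f)}_\alpha(\ell),\sigma)=g(\Delta_\sigma(S^{(g,f)}_\alpha(\ell)))$, $\rho(S^{(g,f)}_\alpha(\ell))=(S^{(g,f)}_\alpha(\ell))(\varepsilon)$. An $M$-DFA is $(Q,\Sigma,u,i_u,\delta,w,\rho)$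 with $Q$ finite nonempty, initial state $u$, initial value $i_u$, $\delta:Q\times\Sigma\to Q$, $w:Q\times\Sigma\to M$, $\rho:Q\to M$; with $q\alpha$ the extended transition and $w^*(q,\varepsilon)=1$, $w^*(q,\alpha\sigma)=w^*(q,\alpha)\cdot w(q\alpha,\sigma)$, it recognizes $\alpha\mapsto i_u\cdot w^*(u,\alpha)\cdot\rho(u\alpha)$. Minimal: no $M$-DFA recognizing the same language has fewer states. *)

(* Defs.v *)
From mathcomp Require Import all_boot.
Set Implicit Arguments. Unset Strict Implicit. Unset Printing Implicit Defensive.

Section Defs.
Variables (M : Type) (mul : M -> M -> M) (Sigma : finType).

Definition lang := seq Sigma -> M.

Definition lscale (m : M) (l : lang) : lang := fun gamma => mul m (l gamma).

Definition Delta (a : seq Sigma) (l : lang) : lang := fun gamma => l (a ++ gamma).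

Definition is_factorization (g : lang -> M) (f : lang -> lang) : Prop :=
  forall l, lscale (g l) (f l) = l.

Definition is_maximal_factorization (g : lang -> M) (h : lang -> lang) : Prop :=
  is_factorization g h /\ forall l m, h (lscale m l) = h l.

Definition S (f : lang -> lang) (alpha : seq Sigma) (l : lang) : lang :=
  foldl (fun l' s => f (Delta [:: s] l')) l alpha.

Lemma S_rcons f alpha s l : S f (rcons alpha s) l = f (Delta [:: s] (S f alpha l)).
Proof. by rewrite /S -cats1 foldl_cat. Qed.

(** A (possibly infinite-state) deterministic automaton with weights in M. *)
Record automaton := Automaton {
  st : Type;
  init : st;
  ival : M;
  dlt : st -> Sigma -> st;
  wt : st -> Sigma -> M;
  rho : st -> M }.

Variable one : M.

Definition run (A : automaton) (q : st A) (alpha : seq Sigma) : st A :=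
  foldl (@dlt A) q alpha.

(** w*(q,eps) = 1, w*(q, alpha sigma) = w*(q,alpha) . w(q alpha, sigma) *)
Fixpoint wstar_rev (A : automaton) (q : st A) (ra : seq Sigma) : M :=
  match ra with
  | [::] => one
  | s :: ra' => mul (wstar_rev q ra') (wt (run q (rev ra')) s)
  end.
Definition wstar (A : automaton) (q : st A) (alpha : seq Sigma) : M :=
  wstar_rev q (rev alpha).

Definition recognized (A : automaton) : lang :=
  fun alpha => mul (mul (ival A) (wstar (init A) alpha)) (rho (run (init A) alpha)).

Definition nstates (A : automaton) (n : nat) : Prop :=
  exists e : 'I_n -> st A, bijective e.

Definition is_MDFA (A : automaton) : Prop := exists n, nstates A n.

Definition minimal_MDFA (A : automaton) : Prop :=
  is_MDFA A /\
  forall (B : automaton) n m, nstates A n -> nstates B m ->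
    recognized B = recognized A -> n <= m.

Definition Nstate (f : lang -> lang) (l0 : lang) :=
  {q : lang | exists alpha, q = S f alpha l0}.

Lemma Nstate_init f l0 : exists alpha, l0 = S f alpha l0.
Proof. by exists [::]. Qed.

Lemma Nstate_step f l0 (q : lang) s :
  (exists alpha, q = S f alpha l0) ->
  exists alpha, f (Delta [:: s] q) = S f alpha l0.
Proof. by case=> alpha ->; exists (rcons alpha s); rewrite S_rcons. Qed.

Definition Naut (g : lang -> M) (f : lang -> lang) (l0 : lang) (m0 : M) : automaton :=
  @Automaton (Nstate f l0)
    (exist _ l0 (Nstate_init f l0))
    m0
    (fun q s => exist _ (f (Delta [:: s] (sval q))) (Nstate_step s (svalP q)))
    (fun q s => g (Delta [:: s] (sval q)))
    (fun q => sval q [::]).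

End Defs.

(* Main.v *)
Require Import Defs.
From mathcomp Require Import all_boot.
From Stdlib Require Import ProofIrrelevance ClassicalEpsilon FunctionalExtensionality.

Section Aux.
Variables (M : Type) (mul : M -> M -> M) (one : M).
Hypothesis mulA : forall a b c, mul a (mul b c) = mul (mul a b) c.
Hypothesis mulm1 : forall a, mul a one = a.
Variable Sigma : finType.

Lemma run_rcons (A : automaton M Sigma) (q : st A) al s : run q (rcons al s) = dlt (run q al) s.
Proof. by rewrite /run -cats1 foldl_cat. Qed.

Lemma run_cat (A : automaton M Sigma) (q : st A) al be : run q (al ++ be) = run (run q al) be.
Proof. by rewrite /run foldl_cat. Qed.

Lemma wstar_nil (A : automaton M Sigma) (q : st A) : wstar mul one q [::] = one.
Proof. by []. Qed.

Lemma wstar_rcons (A : automaton M Sigma) (q : st A) al s :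
  wstar mul one q (rcons al s) = mul (wstar mul one q al) (wt (run q al) s).
Proof. by rewrite /wstar rev_rcons /= revK. Qed.

Lemma wstar_cat (A : automaton M Sigma) (q : st A) al be :
  wstar mul one q (al ++ be) = mul (wstar mul one q al) (wstar mul one (run q al) be).
Proof.
elim/last_ind: be => [|be s IH]; first by rewrite cats0 wstar_nil mulm1.
by rewrite -rcons_cat !wstar_rcons IH run_cat mulA.
Qed.

Definition Lq {A : automaton M Sigma} (q : st A) : lang M Sigma :=
  fun ga => mul (wstar mul one q ga) (rho (run q ga)).

Lemma Delta_rec (A : automaton M Sigma) al :
  Delta al (recognized mul one A) =
  lscale mul (mul (ival A) (wstar mul one (init A) al)) (Lq (run (init A) al)).
Proof.
apply: functional_extensionality => ga.
by rewrite /Delta /recognized /lscale /Lq wstar_cat run_cat !mulA.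
Qed.

End Aux.
Arguments Lq {M} mul one {Sigma A} q _.

Theorem mainTheorem12
  (M : Type) (mul : M -> M -> M) (one : M)
  (mulA : forall a b c, mul a (mul b c) = mul (mul a b) c)
  (mul1m : forall a, mul one a = a)
  (mulm1 : forall a, mul a one = a)
  (no_zero : ~ exists z : M, forall a, mul z a = z /\ mul a z = z)
  (Sigma : finType)
  (g : lang M Sigma -> M) (h : lang M Sigma -> lang M Sigma)
  (hmax : is_maximal_factorization mul g h)
  (l : lang M Sigma) :
  is_MDFA (Naut g h (h l) (g l)) ->
  recognized mul one (Naut g h (h l) (g l)) = l /\
  minimal_MDFA mul one (Naut g h (h l) (g l)).
Proof.
move=> HN.
case: hmax => hfact hinv.
set N := Naut g h (h l) (g l).
have hh : forall x, h (h x) = h x.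
  by move=> x; rewrite -{2}(hfact x) hinv.
have DN : forall al, Delta al l =
   lscale mul (mul (g l) (wstar mul one (init N) al)) (sval (run (init N) al)).
  elim/last_ind => [|al s IH].
    apply: functional_extensionality => ga.
    rewrite /Delta /= wstar_nil mulm1; symmetry; exact: (congr1 (fun f => f ga) (hfact l)).
  apply: functional_extensionality => ga.
  have := congr1 (fun f => f (s :: ga)) IH.
  rewrite /Delta /lscale /= cat_rcons => ->.
  rewrite run_rcons wstar_rcons.
  move: (wstar mul one (init N) al) (run (init N) al) => w q /=.
  have := congr1 (fun f => f ga) (hfact (Delta [:: s] (sval q))).
  rewrite /lscale /Delta /= => <-.
  by rewrite !mulA.
have recN : recognized mul one N = l.
  apply: functional_extensionality => al.
  have := congr1 (fun f => f [::]) (DN al).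
  by rewrite /Delta cats0 /lscale => ->.
have imh : forall al, exists x, sval (run (init N) al) = h x.
  elim/last_ind => [|al s _]; first by exists l.
  by rewrite run_rcons /=; eexists.
have stN : forall al, sval (run (init N) al) = h (Delta al l).
  move=> al; rewrite DN hinv; case: (imh al) => x ->; by rewrite hh.
have SN : forall al, S h al (h l) = sval (run (init N) al).
  elim/last_ind => [|al s IH] //.
  by rewrite S_rcons run_rcons /= IH.
split => //; split => // B n m [eN bN] [eB bB] recB.
have DB : forall al, Delta al l = lscale mul (mul (ival B) (wstar mul one (init B) al))
    (Lq mul one (run (init B) al)).
  by move=> al; rewrite -{1}recN -recB Delta_rec.
pose alpha (i : 'I_n) := proj1_sig (constructive_indefinite_description _ (svalP (eN i))).
have alphaP : forall i, sval (eN i) = S h (alpha i) (h l).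
  by move=> i; rewrite /alpha; case: constructive_indefinite_description.
case: bB => eBi eBK eKB.
pose F (i : 'I_n) := eBi (run (init B) (alpha i)).
have Finj : injective F.
  move=> i j /(congr1 eB); rewrite !eKB => E.
  case: bN => eNi eNK _.
  rewrite -(eNK i) -(eNK j); congr eNi.
  apply: eq_sig_hprop; first by move=> x; apply: proof_irrelevance.
  by rewrite !alphaP !SN !stN !DB !hinv E.
by have := leq_card F Finj; rewrite !card_ord.
Qed.
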